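(* Fix $0<s\le1$ and let $\rho(s):=e^s/s$. Suppose that for some $\chi$, $G$ is a tight $(\rho(s),\chi)$-bidding profile induced by an integrable function $\phi:(0,1]\to[1,\infty)$. Then \[ \chi\ge e^s\int_0^1 e^{-sx}\phi(x)\,\mathrm{d} x . \]
   Context: Given $1<\chi\le\rho$, a $(\rho,\chi)$-bidding profile is a non-decreasing, left-continuous $G:\mathbb{R}\to(0,\infty)$ with (offset) $G(x)<1$ for $x<0$ and $G(x)\ge1$ for $x>0$; (robustness) $\int_{-\infty}^{x+1}G(t)\,\mathrm{d} t\le\rho G(x)$ for all $x\in\mathbb{R}$; (consistency) $\int_{-\infty}^1G(t)\,\mathrm{d} t\le\chi$. It is tight if additionally $\int_{-\infty}^{x+1}G(t)\,\mathrm{d} t=\rho G(x)$ for all $x\le0$ and $\int_{-\infty}^1G(t)\,\mathrm{d} t=\chi$. It is induced by $\phi:(0,1]\to[1,\infty)$ if $G|_{(0,1]}\equiv\phi$. *)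

(* Defs.v *)
From HB Require Import structures.
From mathcomp Require Import all_boot all_order all_algebra.
From mathcomp Require Import all_classical all_reals all_analysis.
Set Implicit Arguments. Unset Strict Implicit. Unset Printing Implicit Defensive.
Import Order.TTheory GRing.Theory Num.Theory.
Import numFieldNormedType.Exports.
Local Open Scope classical_set_scope.
Local Open Scope ring_scope.

Section Bidding.
Context {R : realType}.
Local Notation mu := (@lebesgue_measure R).

Definition rho_s (s : R) : R := expR s / s.

Definition bidding_profile (rho chi : R) (G : R -> R) : Prop :=
  (1 < chi /\ chi <= rho)                                     (* standing assumption *)
  /\ (forall x y, x <= y -> G x <= G y)
  /\ (forall a, G x @[x --> a^'-] --> G a)
  /\ (forall x, 0 < G x)
  /\ ((forall x, x < 0 -> G x < 1) /\ (forall x, 0 < x -> 1 <= G x))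
  /\ (forall x, (\int[mu]_(t in `]-oo, (x + 1)%R]) (G t)%:E <= (rho * G x)%:E)%E)
  /\ (\int[mu]_(t in `]-oo, 1%R]) (G t)%:E <= chi%:E)%E.

Definition tight_bidding_profile (rho chi : R) (G : R -> R) : Prop :=
  bidding_profile rho chi G
  /\ (forall x, x <= 0 ->
         (\int[mu]_(t in `]-oo, (x + 1)%R]) (G t)%:E = (rho * G x)%:E)%E)
  /\ (\int[mu]_(t in `]-oo, 1%R]) (G t)%:E = chi%:E)%E.

Definition induced_by (G phi : R -> R) : Prop :=
  (forall x, 0 < x <= 1 -> 1 <= phi x) /\ (forall x, 0 < x <= 1 -> G x = phi x).

End Bidding.

(* Main.v *)
Require Import Defs.
From HB Require Import structures.
From mathcomp Require Import all_boot all_order all_algebra.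
From mathcomp Require Import all_classical all_reals all_analysis.
From mathcomp Require Import measurable_realfun.
From mathcomp Require Import ring lra.
Import Order.TTheory GRing.Theory Num.Theory.
Import numFieldNormedType.Exports.
Local Open Scope classical_set_scope.
Local Open Scope ring_scope.

Section L8.
Context {R : realType}.
Local Notation mu := (@lebesgue_measure R).
Variables (s chi : R) (G : R -> R).
Hypothesis s0 : 0 < s.
Hypothesis s1 : s <= 1.
Hypothesis Gnd : forall x y : R, x <= y -> G x <= G y.
Hypothesis Gpos : forall x, 0 < G x.
Hypothesis robust : forall x : R,
  (\int[mu]_(t in `]-oo, (x + 1)%R]) (G t)%:E <= (rho_s s * G x)%:E)%E.
Hypothesis tight : forall x : R, x <= 0 ->
  (\int[mu]_(t in `]-oo, (x + 1)%R]) (G t)%:E = (rho_s s * G x)%:E)%E.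
Hypothesis cons : (\int[mu]_(t in `]-oo, 1%R]) (G t)%:E = chi%:E)%E.

Lemma mG (D : set R) : measurable D -> measurable_fun D G.
Proof. by move=> mD; apply: nondecreasing_measurable => // x y; exact: Gnd. Qed.

Lemma intG x : mu.-integrable `]-oo, x] (EFin \o G).
Proof.
apply/integrableP; split; first by apply/measurable_EFinP; exact: mG.
have -> : (\int[mu]_(t in `]-oo, x]) `|(EFin \o G) t|)%E =
    (\int[mu]_(t in `]-oo, x]) (G t)%:E)%E.
  by apply: eq_integral => t _; rewrite /= ger0_norm// ltW.
have := robust (x - 1); rewrite subrK => H.
by apply: (le_lt_trans H); rewrite ltry.
Qed.

Definition F x := \int[mu]_(t in `]-oo, x]) G t.

Lemma FE x : (\int[mu]_(t in `]-oo, x]) (G t)%:E)%E = (F x)%:E.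
Proof. by rewrite /F /Rintegral fineK// integrable_fin_num// intG. Qed.

Lemma intG_itv a b : mu.-integrable `]a, b] (EFin \o G).
Proof. by apply: integrableS (intG b) => //; apply: subset_itvr. Qed.

Lemma FB a b : a <= b -> F b - F a = \int[mu]_(t in `]a, b]) G t.
Proof.
move=> ab; rewrite /F.
have := @Rintegral_itvB R G -oo%O (BRight b) a (intG b).
by apply => //; rewrite bnd_simp.
Qed.

Lemma F_ge0 x : 0 <= F x.
Proof. by apply: Rintegral_ge0 => t _; exact: ltW. Qed.

Lemma Fnd a b : a <= b -> F a <= F b.
Proof.
move=> ab; rewrite -subr_ge0 FB//; apply: Rintegral_ge0 => t _; exact: ltW.
Qed.

Lemma Ftight x : x <= 0 -> F (x + 1) = rho_s s * G x.
Proof. by move=> x0; apply/EFin_inj; rewrite -FE tight. Qed.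

Lemma Fchi : F 1 = chi.
Proof. by apply/EFin_inj; rewrite -FE cons. Qed.

Lemma bounded_of (f : R -> R) (A : set R) (M : R) :
  (forall x, A x -> `|f x| <= M) -> [bounded f x | x in A].
Proof.
move=> H; exists M; split; first by rewrite num_real.
by move=> y My x Ax; apply: le_trans (H x Ax) (ltW My).
Qed.

Lemma int_bounded (f : R -> R) (a b M : R) : measurable_fun `]a, b] f ->
  (forall x, a < x <= b -> `|f x| <= M) -> mu.-integrable `]a, b] (EFin \o f).
Proof.
move=> mf H; apply: measurable_bounded_integrable => //.
  have := lebesgue_measure_itv `]a, b]; move=> /= ->.
  by case: ifP => _; rewrite ?ltry.
apply: (@bounded_of f _ M) => x /=; rewrite in_itv/=; exact: H.
Qed.

Lemma int_le_cst (f : R -> R) (a b M : R) : a <= b -> mu.-integrable `]a, b] (EFin \o f) ->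
  (forall x, a < x <= b -> f x <= M) -> \int[mu]_(t in `]a, b]) f t <= M * (b - a).
Proof.
move=> ab intf H.
have -> : M * (b - a) = \int[mu]_(t in `]a, b]) (cst M t).
  rewrite Rintegral_cst//; have := lebesgue_measure_itv `]a, b]; move=> /= ->.
  rewrite lte_fin.
  have [ab'|ba] := ltP a b; first by rewrite -EFinD.
  have -> : b = a by apply/eqP; rewrite eq_le ba ab.
  by rewrite subrr mulr0.
apply: le_Rintegral => //.
  apply: (@int_bounded _ _ _ `|M|) => //; exact: measurable_cst.
all: try by move=> x /=; rewrite in_itv/=; exact: H.
Qed.

Lemma int_ge_cst (f : R -> R) (a b M : R) : a <= b -> mu.-integrable `]a, b] (EFin \o f) ->
  (forall x, a < x <= b -> M <= f x) -> M * (b - a) <= \int[mu]_(t in `]a, b]) f t.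
Proof.
move=> ab intf H.
have -> : M * (b - a) = \int[mu]_(t in `]a, b]) (cst M t).
  rewrite Rintegral_cst//; have := lebesgue_measure_itv `]a, b]; move=> /= ->.
  rewrite lte_fin.
  have [ab'|ba] := ltP a b; first by rewrite -EFinD.
  have -> : b = a by apply/eqP; rewrite eq_le ba ab.
  by rewrite subrr mulr0.
apply: le_Rintegral => //.
  apply: (@int_bounded _ _ _ `|M|) => //; exact: measurable_cst.
all: try by move=> x /=; rewrite in_itv/=; exact: H.
Qed.

Lemma Fincr a b : a <= b -> F b - F a <= G b * (b - a).
Proof.
move=> ab; rewrite FB//; apply: int_le_cst => //; first exact: intG_itv.
by move=> x /andP[_ xb]; exact: Gnd.
Qed.

Definition a (t : R) := expR (- (s * t)).
Definition k (t : R) := a t * F t.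

Lemma a_gt0 t : 0 < a t. Proof. exact: expR_gt0. Qed.

Lemma a_ni x y : x <= y -> a y <= a x.
Proof. by move=> xy; rewrite /a ler_expR lerN2 ler_pM2l. Qed.

Lemma a_cont : continuous a.
Proof.
move=> x; apply: continuous_comp; last exact: continuous_expR.
apply: continuousN; apply: continuousM; [exact: cst_continuous|exact: cvg_id].
Qed.

Lemma ma (D : set R) : measurable D -> measurable_fun D a.
Proof.
move=> mD; apply: measurable_funS (continuous_measurable_fun a_cont) => //.
Qed.

Lemma mF (D : set R) : measurable D -> measurable_fun D F.
Proof. by move=> mD; apply: nondecreasing_measurable => // x y; exact: Fnd. Qed.

Lemma int_aG v w : mu.-integrable `]v, w] (EFin \o (fun t => a t * G t)).
Proof.
apply: (@int_bounded _ _ _ (a v * G w)).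
  by apply: measurable_funM; [exact: ma|exact: mG].
move=> x /andP[vx xw]; rewrite ger0_norm; last by rewrite mulr_ge0// ltW ?a_gt0.
apply: ler_pM; [exact/ltW/a_gt0|exact/ltW/Gpos|apply: a_ni; exact: ltW|exact: Gnd].
Qed.

Lemma int_k v w : mu.-integrable `]v, w] (EFin \o k).
Proof.
apply: (@int_bounded _ _ _ (a v * F w)).
  by apply: measurable_funM; [exact: ma|exact: mF].
move=> x /andP[vx xw]; rewrite ger0_norm; last by rewrite mulr_ge0// ?F_ge0// ltW ?a_gt0.
rewrite /k; apply: ler_pM; [exact/ltW/a_gt0|exact: F_ge0|apply: a_ni; exact: ltW|exact: Fnd].
Qed.

Lemma int_split (f : R -> R) v w w' : v <= w -> w <= w' ->
  mu.-integrable `]v, w'] (EFin \o f) ->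
  \int[mu]_(t in `]v, w']) f t - \int[mu]_(t in `]v, w]) f t =
  \int[mu]_(t in `]w, w']) f t.
Proof.
move=> vw ww' intf.
by apply: (@Rintegral_itvB R f (BRight v) (BRight w') w intf); rewrite bnd_simp.
Qed.

Lemma int_empty (f : R -> R) v : \int[mu]_(t in `]v, v]) f t = 0.
Proof. by rewrite set_itv_ge ?Rintegral_set0// bnd_simp ltxx. Qed.

Section IBP.
Variables (v W : R).
Hypothesis vW : v <= W.

Let L w := \int[mu]_(t in `]v, w]) (a t * G t) - a w * F w
  - s * \int[mu]_(t in `]v, w]) k t.
Let C := s * a v * (G W + s * F W).

Lemma C_ge0 : 0 <= C.
Proof.
rewrite /C; apply: mulr_ge0; first by apply: mulr_ge0; [exact: ltW|exact/ltW/a_gt0].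
by apply: addr_ge0; [exact/ltW/Gpos|apply: mulr_ge0; [exact: ltW|exact: F_ge0]].
Qed.

Lemma Lstep w w' : v <= w -> w <= w' -> w' <= W ->
  L w' - L w <= C * (w' - w) ^+ 2.
Proof.
move=> vw ww' w'W.
have E1 := int_split _ _ _ _ vw ww' (int_aG v w').
have E2 := int_split _ _ _ _ vw ww' (int_k v w').
set h := w' - w.
have h0 : 0 <= h by rewrite subr_ge0.
set X := \int[mu]_(t in `]w, w']) (a t * G t) in E1.
set Y := \int[mu]_(t in `]w, w']) k t in E2.
have HL : L w' - L w = X - a w' * F w' + a w * F w - s * Y.
  rewrite /L -E1 -E2; ring.
have HX : X <= a w * (F w' - F w).
  rewrite FB// -RintegralZl//; last exact: intG_itv.
  apply: le_Rintegral => //; first exact: int_aG.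
    apply: (@int_bounded _ _ _ (a w * G w')).
      by apply: measurable_funM; [exact: measurable_cst|exact: mG].
    move=> x /andP[_ xw]; rewrite ger0_norm; last by rewrite mulr_ge0// ltW ?a_gt0.
    by apply: ler_wpM2l; [exact/ltW/a_gt0|exact: Gnd].
  move=> x /=; rewrite in_itv/= => /andP[wx _].
  by apply: ler_wpM2r; [exact/ltW/Gpos|apply: a_ni; exact: ltW].
have HY : a w' * F w * h <= Y.
  apply: int_ge_cst => //; first exact: int_k.
  move=> x /andP[wx xw]; rewrite /k; apply: ler_pM; [exact/ltW/a_gt0|exact: F_ge0|exact: a_ni|exact/Fnd/ltW].
have Ha : a w - a w' <= s * h * a w.
  have -> : a w' = a w * expR (- (s * h)).
    by rewrite /a -expRD /h; congr expR; ring.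
  have := expR_ge1Dx (- (s * h)).
  have := a_gt0 w; nra.
have HF : F w' - F w <= G w' * h by exact: Fincr.
have Aw : a w <= a v by exact: a_ni.
have Aw' : 0 < a w' by exact: a_gt0.
have Aw0 : 0 < a w by exact: a_gt0.
have GW : G w' <= G W by exact: Gnd.
have G0 : 0 < G w' by exact: Gpos.
have FW : F w <= F W by exact: Fnd (le_trans ww' w'W).
have F0 : 0 <= F w by exact: F_ge0.
have F'0 : 0 <= F w' by exact: F_ge0.
have Aww' : a w' <= a w by exact: a_ni.
rewrite HL.
have S1 : X - a w' * F w' + a w * F w - s * Y <=
   F w' * (a w - a w') - s * h * a w' * F w.
  have : s * (a w' * F w * h) <= s * Y by rewrite ler_pM2l.
  nra.
apply: (le_trans S1).
have S2 : F w' * (a w - a w') <= F w' * (s * h * a w) by rewrite ler_wpM2l.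
have S3 : F w' * (a w - a w') - s * h * a w' * F w <=
  s * h * (a w * (F w' - F w) + F w * (a w - a w')).
  nra.
apply: (le_trans S3).
have S4 : a w * (F w' - F w) + F w * (a w - a w') <= h * a w * (G w' + s * F w).
  have : a w * (F w' - F w) <= a w * (G w' * h) by rewrite ler_wpM2l// ltW.
  have : F w * (a w - a w') <= F w * (s * h * a w) by rewrite ler_wpM2l.
  nra.
have S5 : s * h * (a w * (F w' - F w) + F w * (a w - a w')) <=
  s * h * (h * a w * (G w' + s * F w)).
  by rewrite ler_wpM2l// mulr_ge0// ltW.
apply: (le_trans S5).
have S6 : a w * (G w' + s * F w) <= a v * (G W + s * F W).
  apply: ler_pM => //; first exact: ltW.
    by rewrite addr_ge0// ?mulr_ge0// ltW.
  by rewrite lerD// ler_pM2l.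
rewrite /C expr2.
have : 0 <= s * h * h by rewrite mulr_ge0// mulr_ge0// ltW.
nra.
Qed.

Lemma Ltele n : L W - L v <= C * (W - v) ^+ 2 / n.+1%:R.
Proof.
set h := (W - v) / n.+1%:R.
have n0 : 0 < n.+1%:R :> R by rewrite ltr0n.
have h0 : 0 <= h by rewrite /h divr_ge0// ?subr_ge0// ltW.
have nh : n.+1%:R * h = W - v by rewrite /h mulrC divfK// gt_eqF.
have key : forall j : nat, (j <= n.+1)%N ->
    L (v + j%:R * h) - L v <= j%:R * (C * h ^+ 2).
  elim => [|j IH] jn.
    by rewrite mul0r addr0 subrr mul0r.
  have jn' : (j <= n.+1)%N by apply: ltnW.
  have jh : j.+1%:R * h <= W - v.
    by rewrite -nh ler_wpM2r// ler_nat.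
  have := @Lstep (v + j%:R * h) (v + j.+1%:R * h).
  rewrite -natr1 mulrDl mul1r addrA.
  have vj : v <= v + j%:R * h by rewrite lerDl mulr_ge0.
  have vh : v + j%:R * h <= v + j%:R * h + h by rewrite lerDl.
  move=> /(_ vj vh).
  have : v + j%:R * h + h <= W.
    by move: jh; rewrite -natr1 mulrDl mul1r; lra.
  move=> H /(_ H) H2.
  have e : v + j%:R * h + h - (v + j%:R * h) = h by ring.
  rewrite e in H2.
  have := IH jn'; lra.
have := key n.+1 (leqnn _); rewrite nh addrCA subrr addr0.
move=> H; apply: (le_trans H).
rewrite le_eqVlt; apply/orP; left; apply/eqP.
by rewrite /h; field; rewrite gt_eqF.
Qed.

Lemma Lle : L W <= L v.
Proof.
rewrite -subr_le0; apply/negPn/negP; rewrite -ltNge => H.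
set d := L W - L v in H.
set D := C * (W - v) ^+ 2.
have D0 : 0 <= D by rewrite mulr_ge0 ?C_ge0// sqr_ge0.
have := Ltele (Num.trunc (D / d)).
have := truncnS_gt (D / d).
set m := (Num.trunc (D / d)).+1%:R.
move=> Hm Hd.
have m0 : 0 < m by rewrite /m ltr0n.
have h1 : d * m <= D by move: Hd; rewrite -/d -/D ler_pdivlMr.
have h2 : D < d * m by move: Hm; rewrite ltr_pdivrMr // mulrC.
lra.
Qed.

Lemma IBP : \int[mu]_(t in `]v, W]) (a t * G t) - a W * F W
  - s * \int[mu]_(t in `]v, W]) k t <= - (a v * F v).
Proof.
have := Lle; rewrite /L !int_empty mulr0 subr0 sub0r.
by [].
Qed.

End IBP.

Lemma Flip x t : x <= t -> `|F x - F t| <= G t * (t - x).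
Proof.
move=> xt; rewrite distrC ger0_norm ?subr_ge0; first exact: Fincr.
exact: Fnd.
Qed.

Lemma F_cont : continuous F.
Proof.
move=> x; apply/cvgrPdist_le => /= eps eps0.
set M := G (x + 1).
have M0 : 0 < M by exact: Gpos.
apply/nbhs_ballP; exists (Num.min 1 (eps / M)).
  by rewrite /= lt_min ltr01 divr_gt0.
move=> t /=; rewrite /ball /= lt_min => /andP[xt1 xte].
have HM : forall y, y <= x + 1 -> G y <= M by move=> y yx; exact: Gnd.
have xte' : `|x - t| * M <= eps.
  by rewrite -ler_pdivlMr// ltW.
have [xt|tx] := leP x t.
  apply: (le_trans (Flip x t xt)).
  have tx1 : t <= x + 1.
    by move: xt1; rewrite distrC ger0_norm ?subr_ge0// ltrBlDl addrC => /ltW.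
  rewrite distrC ger0_norm ?subr_ge0// in xte'.
  apply: le_trans xte'; rewrite mulrC ler_wpM2l ?subr_ge0//.
  exact: HM.
rewrite distrC; apply: (le_trans (Flip t x (ltW tx))).
rewrite ger0_norm ?subr_ge0 in xte'; last exact: ltW.
apply: le_trans xte'; rewrite mulrC; apply: ler_wpM2l.
  by rewrite subr_ge0; exact: ltW.
by apply: HM; rewrite lerDl.
Qed.

Lemma k_cont : continuous k.
Proof. by move=> x; apply: continuousM; [exact: a_cont|exact: F_cont]. Qed.

Lemma shift_cont : continuous (fun x : R => x + 1).
Proof. by move=> x; apply: continuousD; [exact: cvg_id|exact: cst_continuous]. Qed.

Lemma dshift : ((fun x : R => x + 1)^`())%classic = cst 1.
Proof.
apply/funext => x; rewrite derive1E.
have H : is_derive x (1:R) (fun x : R => x + 1) (1 + 0) by apply: is_deriveD.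
by rewrite derive_val addr0.
Qed.

Lemma mk_shift (D : set R) : measurable D -> measurable_fun D (fun t => k (t + 1)).
Proof.
move=> mD; apply: measurable_funS (continuous_measurable_fun _) => //.
by move=> x; apply: (@continuous_comp _ _ _ (fun t : R => t + 1) k); [exact: shift_cont|exact: k_cont].
Qed.

Lemma mk (D : set R) : measurable D -> measurable_fun D k.
Proof.
move=> mD; apply: measurable_funS (continuous_measurable_fun k_cont) => //.
Qed.

Lemma shift_int v : v <= 0 ->
  \int[mu]_(t in `]v, 0]) k (t + 1) = \int[mu]_(t in `]v + 1, 1]) k t.
Proof.
move=> v0.
have H := @integration_by_substitution_increasing R (fun x => x + 1) k v 0 v0.
rewrite add0r in H.
rewrite /Rintegral; congr fine.
rewrite integral_itv_obnd_cbnd; last by apply/measurable_EFinP; exact: mk_shift.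
rewrite [RHS]integral_itv_obnd_cbnd; last by apply/measurable_EFinP; exact: mk.
rewrite H.
- by apply: eq_integral => x _; rewrite dshift /= mulr1.
- by move=> x y _ _; rewrite ltrD2r.
- by move=> x _; rewrite dshift; exact: cst_continuous.
- by rewrite dshift; apply: is_cvg_cst.
- by rewrite dshift; apply: is_cvg_cst.
- split.
  + move=> x _; apply: derivableD; [exact: derivable_id|exact: derivable_cst].
  + exact: cvg_at_right_filter (shift_cont v).
  + exact: cvg_at_left_filter (shift_cont 0).
- by move=> x; apply: continuous_subspaceT => y; exact: k_cont.
Qed.

Definition I0 := \int[mu]_(t in `]0, 1]) (a t * G t).
Definition c0 := I0 - a 1 * chi.

Lemma aG_shift t : t <= 0 -> a t * G t = s * k (t + 1).
Proof.
move=> t0; rewrite /k Ftight// /rho_s /a.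
have e : expR (- (s * (t + 1))) * expR s = expR (- (s * t)).
  by rewrite -expRD; congr expR; ring.
rewrite -e; field; exact: lt0r_neq0.
Qed.

Lemma int_k_shift v : v <= 0 -> mu.-integrable `]v, 0] (EFin \o (fun t => k (t + 1))).
Proof.
move=> v0; apply: (@int_bounded _ _ _ (a v * F 1)); first exact: mk_shift.
move=> x /andP[vx x0]; rewrite /k ger0_norm; last by rewrite mulr_ge0 ?F_ge0// ltW ?a_gt0.
apply: ler_pM; [exact/ltW/a_gt0|exact: F_ge0| |].
  by apply: a_ni; apply: ltW; apply: (lt_le_trans vx); rewrite lerDl.
by apply: Fnd; lra.
Qed.

Lemma key v : v <= 0 -> k v <= s * \int[mu]_(t in `]v, v + 1]) k t - c0.
Proof.
move=> v0.
have v1 : v <= 1 by apply: (le_trans v0); exact: ler01.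
have HI := @IBP v 1 v1.
have S1 := int_split _ _ _ _ v0 ler01 (int_aG v 1).
have vv1 : v <= v + 1 by rewrite lerDl.
have v11 : v + 1 <= 1 by lra.
have S2 := int_split _ _ _ _ vv1 v11 (int_k v 1).
have HA : \int[mu]_(t in `]v, 0]) (a t * G t) = s * \int[mu]_(t in `]v + 1, 1]) k t.
  rewrite -shift_int// -RintegralZl//; last exact: int_k_shift.
  apply: eq_Rintegral => t; rewrite inE/= in_itv/= => /andP[_ t0].
  exact: aG_shift.
move: HI S1 S2 HA; rewrite /c0 /I0 Fchi -/(k v).
set T := \int[mu]_(t in `]v, 1]) (a t * G t).
set A := \int[mu]_(t in `]v, 0]) (a t * G t).
set K := \int[mu]_(t in `]v, 1]) k t.
set K1 := \int[mu]_(t in `]v, v + 1]) k t.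
set K2 := \int[mu]_(t in `]v + 1, 1]) k t.
set J := \int[mu]_(t in `]0, 1]) (a t * G t).
move=> HI S1 S2 HA.
have : T = A + J by rewrite -S1; ring.
have : K = K1 + K2 by rewrite -S2; ring.
move=> eK eT; rewrite eK eT HA in HI.
nra.
Qed.

Lemma k_ge0 x : 0 <= k x.
Proof. by rewrite /k mulr_ge0 ?F_ge0// ltW ?a_gt0. Qed.

Definition S (n : nat) := [set k x | x in `[- (n%:R : R), 1 - n%:R]].
Definition B n := sup (S n).

Lemma S_ne n : S n !=set0.
Proof.
exists (k (- n%:R)); exists (- n%:R) => //.
by rewrite /= in_itv/= lexx /=; lra.
Qed.

Lemma S_sup n : has_sup (S n).
Proof.
split; first exact: S_ne.
exists (a (- n%:R) * F 1) => _ [x + <-].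
rewrite /= in_itv/= => /andP[nx xn].
rewrite /k; apply: ler_pM; [exact/ltW/a_gt0|exact: F_ge0|exact: a_ni|].
apply: Fnd; apply: (le_trans xn); rewrite lerBlDr lerDl; exact: ler0n.
Qed.

Lemma B_ub n x : - n%:R <= x -> x <= 1 - n%:R -> k x <= B n.
Proof.
move=> h1 h2; apply: sup_upper_bound; first exact: S_sup.
by exists x => //; rewrite /= in_itv/= h1 h2.
Qed.

Lemma B_ge0 n : 0 <= B n.
Proof.
apply: le_trans (k_ge0 (- n%:R)) _; apply: B_ub; first exact: lexx.
lra.
Qed.

Lemma B_step n : 0 < c0 -> B n.+1 <= B n - c0.
Proof.
move=> c00.
set M := Num.max (B n.+1) (B n).
have M0 : 0 <= M by rewrite le_max B_ge0.
have H : B n.+1 <= M - c0.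
  apply: ge_sup; first exact: S_ne.
  move=> _ [x + <-]; rewrite /= in_itv/= => /andP[h1 h2].
  have e : (n.+1%:R : R) = n%:R + 1 by rewrite natr1.
  rewrite e in h1 h2.
  have x0 : x <= 0 by have := ler0n R n; lra.
  apply: (le_trans (key x x0)); rewrite lerD2r.
  have HK : \int[mu]_(t in `]x, x + 1]) k t <= M * (x + 1 - x).
    apply: int_le_cst; [by rewrite lerDl|exact: int_k|].
    move=> t /andP[xt tx].
    have [tn|tn] := leP t (- n%:R).
      apply: (@le_trans _ _ (B n.+1)); last by rewrite le_max lexx.
      by apply: B_ub; rewrite e; lra.
    apply: (@le_trans _ _ (B n)); last by rewrite le_max lexx orbT.
    by apply: B_ub; lra.
  have e2 : x + 1 - x = 1 by ring.
  rewrite e2 mulr1 in HK.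
  have : s * \int[mu]_(t in `]x, x + 1]) k t <= s * M by rewrite ler_pM2l.
  have : s * M <= M by rewrite ler_piMl// ltW.
  lra.
have [h|h] := leP (B n.+1) (B n).
  by move: H; rewrite /M (max_idPr h).
move: H; rewrite /M (max_idPl (ltW h)); lra.
Qed.

Lemma B_ind n : 0 < c0 -> B n <= B 0 - n%:R * c0.
Proof.
move=> c00; elim: n => [|n IH]; first by rewrite mul0r subr0.
have := B_step n c00; rewrite -natr1; lra.
Qed.

Lemma c0_le0 : c0 <= 0.
Proof.
rewrite leNgt; apply/negP => c00.
set n := (Num.trunc (B 0 / c0)).+1.
have := B_ind n c00; have := B_ge0 n.
have := truncnS_gt (B 0 / c0); rewrite -/n => Hn.
have : B 0 < n%:R * c0 by rewrite -ltr_pdivrMr.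
lra.
Qed.

End L8.

Theorem lemma8 (R : realType) (s chi : R) (G phi : R -> R) :
  0 < s -> s <= 1 ->
  tight_bidding_profile (rho_s s) chi G ->
  induced_by G phi ->
  (@lebesgue_measure R).-integrable `]0%R, 1%R] (EFin \o phi) ->
  ((expR s)%:E * \int[@lebesgue_measure R]_(x in `]0%R, 1%R]) (expR (- (s * x)) * phi x)%:E
     <= chi%:E)%E.
Proof.
move=> s0 s1 [[_ [Gnd [_ [Gpos [_ [robust _]]]]]] [tight cons]] [_ Gphi] _.
have H := @c0_le0 R s chi G s0 s1 Gnd Gpos robust tight cons.

have -> : (\int[@lebesgue_measure R]_(x in `]0%R, 1%R]) (expR (- (s * x)) * phi x)%:E)%E
    = (I0 s G)%:E.
  rewrite /I0 /Rintegral fineK; last first.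
    by apply: integrable_fin_num => //; exact: int_aG.
  apply: eq_integral => x; rewrite inE/= in_itv/= => hx.
  by rewrite Gphi.
rewrite -EFinM lee_fin.
move: H; rewrite /c0 /a mulr1 => H.
have e : expR s * expR (- s) = 1 by rewrite -expRD subrr expR0.
have : expR s * I0 s G <= expR s * (expR (- s) * chi).
  by rewrite ler_pM2l ?expR_gt0//; lra.
by rewrite mulrA e mul1r.
Qed.
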